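(* For every integer $n\ge 2$, $$C^0_{L_n}=1+2\cos\Big(\frac{\pi}{n+1}\Big)\le C_{L_n}<3,$$ and moreover $C^0_{L_n}=C_{L_n}$ holds if and only if $2\le n\le 8$.
   Context: For $n\in\mathbb N$, $L_n$ is the path graph with vertex set $\{1,\dots,n\}$ and edges $\{j,j+1\}$, $1\le j\le n-1$, equipped with the graph (shortest path) distance $d$. A measure $\mu$ on a graph is a weight function $\mu:V\to(0,\infty)$, with $\mu(A)=\sum_{v\in A}\mu(v)$. Closed balls are $B(x,r)=\{y:d(x,y)\le r\}$. The doubling constant of $\mu$ is $C_\mu=\sup\{\mu(B(x,2k+1))/\mu(B(x,k)): x\in V,\ k\in\{0,1,2,\dots\}\}$ (equivalently, $\sup_{x,r>0}\mu(B^{o}(x,2r))/\mu(B^{o}(x,r))$ with open balls), and $\mu$ is doubling if $C_\mu<\infty$. The least doubling constant of a graph $G$ is $C_G=\inf\{C_\mu:\mu \text{ doubling on } G\}$. Also $C^0_\mu=\sup_{x\in V}\mu(B(x,1))/\mu(x)$ and $C^0_G=\inf_\mu C^0_\mu$. *)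

(* Defs.v *)
From Stdlib Require Import Reals List Arith.
From Coquelicot Require Import Coquelicot.
Open Scope R_scope.

(* Path graph L_n: vertex set {1,...,n}, edges {j, j+1}.
   Its shortest-path distance is |x - y|. *)
Definition vertex (n : nat) (v : nat) : Prop := (1 <= v <= n)%nat.
Definition path_dist (x y : nat) : nat := ((x - y) + (y - x))%nat.

Definition is_measure (n : nat) (mu : nat -> R) : Prop :=
  forall v, vertex n v -> 0 < mu v.

Definition ball_mass (n : nat) (mu : nat -> R) (x r : nat) : R :=
  fold_right Rplus 0
    (map (fun y => if Nat.leb (path_dist x y) r then mu y else 0) (seq 1 n)).

Definition doubling_const (n : nat) (mu : nat -> R) : Rbar :=
  Lub_Rbar (fun c => exists x k, vertex n x /\
     c = ball_mass n mu x (2 * k + 1) / ball_mass n mu x k).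

Definition least_doubling_const (n : nat) : Rbar :=
  Glb_Rbar (fun c => exists mu, is_measure n mu /\ doubling_const n mu = Finite c).

Definition doubling_const0 (n : nat) (mu : nat -> R) : Rbar :=
  Lub_Rbar (fun c => exists x, vertex n x /\ c = ball_mass n mu x 1 / mu x).

Definition least_doubling_const0 (n : nat) : Rbar :=
  Glb_Rbar (fun c => exists mu, is_measure n mu /\ doubling_const0 n mu = Finite c).

(* Main.v *)
Require Import Defs.
From Stdlib Require Import Reals Lra Lia List Arith.
From Coquelicot Require Import Coquelicot.
Open Scope R_scope.
Ltac lia' := exfalso; lia.

Fixpoint T (f : nat -> R) (m : nat) : R :=
  match m with O => 0 | S m' => T f m' + f (S m') end.

Lemma fold_app1 (l : list R) a : fold_right Rplus 0 (l ++ a :: nil) = fold_right Rplus 0 l + a.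
Proof. induction l; simpl; [ring| rewrite IHl; ring]. Qed.

Lemma fold_T g n : fold_right Rplus 0 (map g (seq 1 n)) = T g n.
Proof.
  induction n; [reflexivity|].
  rewrite seq_S, map_app. change (map g ((1+n)%nat :: nil)) with (g (1+n)%nat :: nil).
  rewrite fold_app1, IHn. simpl. reflexivity.
Qed.

Lemma ball_T n mu x r : ball_mass n mu x r =
  T (fun y => if Nat.leb (path_dist x y) r then mu y else 0) n.
Proof. unfold ball_mass. apply fold_T. Qed.

Lemma T_S f m : T f (S m) = T f m + f (S m).
Proof. reflexivity. Qed.

Lemma T_ext f g m : (forall i, (1 <= i <= m)%nat -> f i = g i) -> T f m = T g m.
Proof. induction m; intros H; simpl; [reflexivity|]. rewrite IHm by (intros; apply H; lia).
  rewrite H by lia. reflexivity. Qed.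

Lemma T_plus f g m : T (fun i => f i + g i) m = T f m + T g m.
Proof. induction m; simpl; [ring|rewrite IHm; ring]. Qed.

Lemma T_scal c f m : T (fun i => c * f i) m = c * T f m.
Proof. induction m; simpl; [ring|rewrite IHm; ring]. Qed.

Lemma T_const c m : T (fun _ => c) m = INR m * c.
Proof. induction m; simpl T; [simpl; ring|rewrite IHm, S_INR; ring]. Qed.

Lemma T_le f g m : (forall i, (1 <= i <= m)%nat -> f i <= g i) -> T f m <= T g m.
Proof. induction m; intros H; simpl; [lra|].
  assert (T f m <= T g m) by (apply IHm; intros; apply H; lia).
  assert (f (S m) <= g (S m)) by (apply H; lia). lra. Qed.

Lemma T_nonneg f m : (forall i, (1 <= i <= m)%nat -> 0 <= f i) -> 0 <= T f m.
Proof. intros H. replace 0 with (T (fun _ => 0) m). apply T_le; auto.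
  rewrite T_const; ring. Qed.

Lemma T_single f m j : (forall i, (1 <= i <= m)%nat -> 0 <= f i) -> (1 <= j <= m)%nat -> f j <= T f m.
Proof. induction m; intros H Hj; [lia|]. simpl.
  destruct (Nat.eq_dec j (S m)) as [->|Hne].
  - assert (0 <= T f m) by (apply T_nonneg; intros; apply H; lia). lra.
  - assert (f j <= T f m) by (apply IHm; [intros; apply H; lia| lia]).
    assert (0 <= f (S m)) by (apply H; lia). lra. Qed.

Lemma T_point a v m : T (fun y => if Nat.eqb y a then v else 0) m =
  if (Nat.leb 1 a && Nat.leb a m)%bool then v else 0.
Proof. induction m.
  - simpl T. destruct (Nat.leb_spec 1 a); destruct (Nat.leb_spec a 0); simpl; try lra; lia'.
  - rewrite T_S, IHm. cbv beta. destruct (Nat.eqb_spec (S m) a); destruct (Nat.leb_spec 1 a);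
    destruct (Nat.leb_spec a m); destruct (Nat.leb_spec a (S m)); simpl; try lra; lia'. Qed.

Lemma T_trunc g m n : (forall y, (m < y)%nat -> g y = 0) -> (m <= n)%nat -> T g n = T g m.
Proof. intros H Hmn. induction Hmn; [reflexivity|]. simpl. rewrite IHHmn, H by lia. ring. Qed.

Lemma T_shift a b m : b O = 0 ->
  T (fun x => a x * b (x - 1)%nat) m = T (fun x => a (S x) * b x) m - a (S m) * b m.
Proof. intros Hb. induction m; simpl T.
  - rewrite Hb. ring.
  - rewrite IHm, Nat.sub_0_r. ring. Qed.

Definition ext (n : nat) (mu : nat -> R) (a : nat) : R :=
  if (Nat.leb 1 a && Nat.leb a n)%bool then mu a else 0.

Lemma ext_in n mu a : (1 <= a <= n)%nat -> ext n mu a = mu a.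
Proof. intros H. unfold ext. destruct (Nat.leb_spec 1 a); destruct (Nat.leb_spec a n); simpl; auto; lia'. Qed.

Lemma ball0 n mu x : vertex n x -> ball_mass n mu x 0 = mu x.
Proof. intros Hx. rewrite ball_T.
  rewrite (T_ext _ (fun y => if Nat.eqb y x then mu x else 0)).
  - rewrite T_point. unfold vertex in Hx. destruct (Nat.leb_spec 1 x); destruct (Nat.leb_spec x n); simpl; auto; lia'.
  - intros i Hi. unfold path_dist. destruct (Nat.eqb_spec i x) as [->|Hne].
    + replace (x - x + (x - x))%nat with 0%nat by lia. reflexivity.
    + destruct (Nat.leb_spec (x - i + (i - x))%nat 0); [lia'|reflexivity]. Qed.

Lemma ball1 n mu x : vertex n x -> ball_mass n mu x 1 =
  ext n mu (x - 1)%nat + ext n mu x + ext n mu (x + 1)%nat.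
Proof. intros Hx. unfold vertex in Hx. rewrite ball_T.
  rewrite (T_ext _ (fun y => (if Nat.eqb y (x-1) then ext n mu (x-1) else 0) +
     (if Nat.eqb y x then ext n mu x else 0) + (if Nat.eqb y (x+1) then ext n mu (x+1) else 0))).
  - rewrite !T_plus, !T_point. unfold ext.
    destruct (Nat.leb 1 (x-1) && Nat.leb (x-1) n)%bool;
    destruct (Nat.leb 1 x && Nat.leb x n)%bool;
    destruct (Nat.leb 1 (x+1) && Nat.leb (x+1) n)%bool; reflexivity.
  - intros i Hi. unfold path_dist.
    destruct (Nat.eqb_spec i (x-1)); destruct (Nat.eqb_spec i x); destruct (Nat.eqb_spec i (x+1));
    destruct (Nat.leb_spec (x - i + (i - x))%nat 1); try lia';
    try (subst i; rewrite ext_in by lia; ring); lra. Qed.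

Lemma ball_nonneg_terms n mu x r : is_measure n mu ->
  forall i, (1 <= i <= n)%nat -> 0 <= (if Nat.leb (path_dist x i) r then mu i else 0).
Proof. intros Hm i Hi. destruct (Nat.leb _ _); [apply Rlt_le, Hm; unfold vertex; lia| lra]. Qed.

Lemma ball_ge n mu x r : is_measure n mu -> vertex n x -> mu x <= ball_mass n mu x r.
Proof. intros Hm Hx. rewrite ball_T.
  replace (mu x) with ((fun y => if Nat.leb (path_dist x y) r then mu y else 0) x).
  - apply (T_single (fun y => if Nat.leb (path_dist x y) r then mu y else 0) n x); [apply ball_nonneg_terms; auto| exact Hx].
  - simpl. unfold path_dist. replace (x - x + (x - x))%nat with 0%nat by lia. reflexivity. Qed.

Lemma ball_pos n mu x r : is_measure n mu -> vertex n x -> 0 < ball_mass n mu x r.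
Proof. intros Hm Hx. eapply Rlt_le_trans; [apply Hm, Hx| apply ball_ge; auto]. Qed.

Lemma ball_full n mu x r : vertex n x -> (n <= r + 1)%nat -> ball_mass n mu x r = T mu n.
Proof. intros Hx Hr. rewrite ball_T. apply T_ext. intros i Hi. unfold vertex, path_dist in *.
  destruct (Nat.leb_spec (x - i + (i - x))%nat r); [reflexivity| lia']. Qed.

Lemma div_le a b B : 0 < b -> a <= B * b -> a / b <= B.
Proof. intros Hb H. unfold Rdiv. apply Rmult_le_reg_r with b; auto.
  rewrite Rmult_assoc, Rinv_l by lra. lra. Qed.

Lemma le_div a b B : 0 < b -> a / b <= B -> a <= B * b.
Proof. intros Hb H. apply Rmult_le_compat_r with (r := b) in H; [|lra].
  unfold Rdiv in H. rewrite Rmult_assoc, Rinv_l in H by lra. lra. Qed.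
Definition th (n : nat) : R := PI / INR (n + 1).
Definition sn (n j : nat) : R := sin (INR j * th n).
Definition lam (n : nat) : R := 1 + 2 * cos (th n).

Lemma INR_n1_pos n : 0 < INR (n + 1).
Proof. rewrite plus_INR; simpl. pose proof (pos_INR n). lra. Qed.

Lemma th_pos n : 0 < th n.
Proof. unfold th. apply Rdiv_lt_0_compat; [apply PI_RGT_0| apply INR_n1_pos]. Qed.

Lemma sn_0 n : sn n 0 = 0.
Proof. unfold sn. simpl. rewrite Rmult_0_l. apply sin_0. Qed.

Lemma sn_end n : sn n (n + 1) = 0.
Proof. unfold sn, th. replace (INR (n + 1) * (PI / INR (n + 1))) with PI.
  apply sin_PI. field. apply Rgt_not_eq, INR_n1_pos. Qed.

Lemma sn_pos n j : (1 <= j <= n)%nat -> 0 < sn n j.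
Proof. intros Hj. unfold sn, th. apply sin_gt_0.
  - apply Rmult_lt_0_compat; [apply lt_0_INR; lia| apply th_pos].
  - replace PI with (INR (n+1) * (PI / INR (n+1))) at 2 by (field; apply Rgt_not_eq, INR_n1_pos).
    apply Rmult_lt_compat_r; [apply th_pos| apply lt_INR; lia]. Qed.

Lemma sn_le1 n j : sn n j <= 1.
Proof. unfold sn. apply SIN_bound. Qed.

Lemma sn_rec n j : (1 <= j)%nat -> sn n (j - 1) + sn n (j + 1) = 2 * cos (th n) * sn n j.
Proof. intros Hj. unfold sn. rewrite minus_INR by lia. rewrite plus_INR. simpl INR.
  replace ((INR j - 1) * th n) with (INR j * th n - th n) by ring.
  replace ((INR j + 1) * th n) with (INR j * th n + th n) by ring.
  rewrite sin_minus, sin_plus. ring. Qed.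

Lemma ext_sn n a : (a <= n + 1)%nat -> ext n (sn n) a = sn n a.
Proof. intros Ha. destruct (Nat.eq_dec a 0) as [->|H0].
  - unfold ext. simpl. rewrite sn_0. reflexivity.
  - destruct (Nat.eq_dec a (n+1)) as [->|H1].
    + unfold ext. rewrite sn_end. destruct (Nat.leb 1 (n+1) && Nat.leb (n+1) n)%bool; reflexivity.
    + apply ext_in. lia. Qed.

Lemma sn_ball1 n x : vertex n x -> ball_mass n (sn n) x 1 = lam n * sn n x.
Proof. intros Hx. rewrite ball1 by exact Hx. unfold vertex in Hx.
  rewrite !ext_sn by lia. unfold lam.
  pose proof (sn_rec n x ltac:(lia)). lra. Qed.

Lemma ext_0 n mu : ext n mu 0 = 0.
Proof. reflexivity. Qed.

Lemma ext_out n mu : ext n mu (S n) = 0.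
Proof. unfold ext. destruct (Nat.leb_spec (S n) n); [lia|]. rewrite Bool.andb_false_r. reflexivity. Qed.

Lemma identity_I n mu :
  T (fun x => sn n x * ball_mass n mu x 1) n = lam n * T (fun x => sn n x * mu x) n.
Proof.
  rewrite (T_ext _ (fun x => (sn n x * ext n mu (x - 1)%nat + sn n x * ext n mu x) + ext n mu (x + 1)%nat * sn n x)).
  2:{ intros i Hi. rewrite ball1 by (unfold vertex; lia). ring. }
  rewrite !T_plus.
  rewrite (T_shift (sn n) (ext n mu) n (ext_0 n mu)).
  rewrite (T_ext (fun x => ext n mu (x + 1)%nat * sn n x) (fun x => ext n mu (S x) * sn n x))
    by (intros i _; rewrite Nat.add_1_r; reflexivity).
  pose proof (T_shift (ext n mu) (sn n) n (sn_0 n)) as Hs.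
  rewrite ext_out in Hs.
  assert (HSn : sn n (S n) = 0) by (replace (S n) with (n+1)%nat by lia; apply sn_end).
  rewrite HSn in *.
  assert (E : T (fun x => ext n mu (S x) * sn n x) n = T (fun x => ext n mu x * sn n (x - 1)%nat) n) by lra.
  rewrite E.
  rewrite <- T_scal.
  rewrite Rmult_0_l, Rminus_0_r, <- !T_plus.
  apply T_ext. intros i Hi. cbv beta. rewrite (ext_in n mu i) by lia.
  pose proof (sn_rec n i ltac:(lia)) as R. unfold lam.
  replace (S i) with (i + 1)%nat by lia. 
  transitivity (mu i * (sn n (i - 1) + sn n (i + 1)) + sn n i * mu i); [ring|].
  rewrite R. ring.
Qed.

Lemma LB n mu c : (1 <= n)%nat -> is_measure n mu ->
  (forall x, vertex n x -> ball_mass n mu x 1 <= c * mu x) -> lam n <= c.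
Proof. intros Hn Hm H.
  assert (Spos : 0 < T (fun x => sn n x * mu x) n).
  { apply Rlt_le_trans with (sn n 1 * mu 1%nat).
    - apply Rmult_lt_0_compat; [apply sn_pos; lia| apply Hm; unfold vertex; lia].
    - apply (T_single (fun x => sn n x * mu x) n 1); [|lia].
      intros i Hi. apply Rlt_le, Rmult_lt_0_compat; [apply sn_pos; lia| apply Hm; unfold vertex; lia]. }
  assert (T (fun x => sn n x * ball_mass n mu x 1) n <= T (fun x => c * (sn n x * mu x)) n).
  { apply T_le. intros i Hi. 
    replace (c * (sn n i * mu i)) with (sn n i * (c * mu i)) by ring.
    apply Rmult_le_compat_l; [apply Rlt_le, sn_pos; lia| apply H; unfold vertex; lia]. }
  rewrite identity_I, T_scal in H0.
  apply Rmult_le_reg_r with (T (fun x => sn n x * mu x) n); auto.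
Qed.
Lemma Glb_ge (E : R -> Prop) a : (forall c, E c -> a <= c) -> Rbar_le a (Glb_Rbar E).
Proof. intros H. destruct (Glb_Rbar_correct E) as [_ H2]. apply H2. intros c Hc. apply H, Hc. Qed.

Lemma Glb_le (E : R -> Prop) c : E c -> Rbar_le (Glb_Rbar E) c.
Proof. intros H. destruct (Glb_Rbar_correct E) as [H1 _]. apply H1, H. Qed.

Lemma Lub_elem_le (E : R -> Prop) r c : Lub_Rbar E = Finite c -> E r -> r <= c.
Proof. intros H Er. destruct (Lub_Rbar_correct E) as [H1 _]. rewrite H in H1. apply (H1 r Er). Qed.

Lemma Lub_bound (E : R -> Prop) r0 B : E r0 -> (forall r, E r -> r <= B) ->
  exists c, Lub_Rbar E = Finite c /\ c <= B.
Proof. intros H0 HB. destruct (Lub_Rbar_correct E) as [H1 H2].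
  assert (Hub : Rbar_le (Lub_Rbar E) B) by (apply H2; intros r Hr; apply HB, Hr).
  assert (Hlb : Rbar_le r0 (Lub_Rbar E)) by (apply H1, H0).
  destruct (Lub_Rbar E) as [c| |]; simpl in *; try contradiction. exists c; split; auto. Qed.

Lemma ratio0_le n mu c x : doubling_const0 n mu = Finite c -> vertex n x ->
  ball_mass n mu x 1 / mu x <= c.
Proof. intros H Hx. eapply Lub_elem_le; [exact H|]. exists x; split; auto. Qed.

Lemma ratio_le n mu c x k : doubling_const n mu = Finite c -> vertex n x ->
  ball_mass n mu x (2 * k + 1) / ball_mass n mu x k <= c.
Proof. intros H Hx. eapply Lub_elem_le; [exact H|]. exists x, k; split; auto. Qed.

Lemma ratio_le' n mu c x k : is_measure n mu -> doubling_const n mu = Finite c -> vertex n x ->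
  ball_mass n mu x (2 * k + 1) <= c * ball_mass n mu x k.
Proof. intros Hm H Hx. apply le_div; [apply ball_pos; auto| eapply ratio_le; eauto]. Qed.

Lemma C_ball1 n mu c x : is_measure n mu -> doubling_const n mu = Finite c -> vertex n x ->
  ball_mass n mu x 1 <= c * mu x.
Proof. intros Hm H Hx. pose proof (ratio_le' n mu c x 0 Hm H Hx) as R.
  rewrite ball0 in R by exact Hx. simpl in R. exact R. Qed.

Lemma dc_bound n mu B : (1 <= n)%nat -> is_measure n mu ->
  (forall x k, vertex n x -> ball_mass n mu x (2 * k + 1) <= B * ball_mass n mu x k) ->
  exists c, doubling_const n mu = Finite c /\ c <= B.
Proof. intros Hn Hm H. unfold doubling_const.
  apply Lub_bound with (r0 := ball_mass n mu 1 (2*0+1) / ball_mass n mu 1 0).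
  - exists 1%nat, 0%nat. split; [unfold vertex; lia| reflexivity].
  - intros r [x [k [Hx ->]]]. apply div_le; [apply ball_pos; auto| apply H; auto]. Qed.

Lemma sn_measure n : is_measure n (sn n).
Proof. intros v Hv. apply sn_pos. exact Hv. Qed.

Lemma dc0_sine n : (1 <= n)%nat -> doubling_const0 n (sn n) = Finite (lam n).
Proof. intros Hn. unfold doubling_const0. apply is_lub_Rbar_unique. split.
  - intros r [x [Hx ->]]. rewrite sn_ball1 by exact Hx. simpl. right. field.
    apply Rgt_not_eq, sn_pos, Hx.
  - intros b Hb. apply (Hb (lam n)). exists 1%nat. split; [unfold vertex; lia|].
    rewrite sn_ball1 by (unfold vertex; lia). field. apply Rgt_not_eq, sn_pos; lia. Qed.

Lemma part1 n : (1 <= n)%nat -> least_doubling_const0 n = Finite (lam n).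
Proof. intros Hn. unfold least_doubling_const0. apply is_glb_Rbar_unique. split.
  - intros c [mu [Hm Hd]]. simpl. apply (LB n mu c Hn Hm). intros x Hx.
    apply le_div; [apply Hm, Hx| eapply ratio0_le; eauto].
  - intros b Hb. apply Hb. exists (sn n). split; [apply sn_measure| apply dc0_sine, Hn]. Qed.

Lemma C_ge_lam n c : (1 <= n)%nat ->
  (exists mu, is_measure n mu /\ doubling_const n mu = Finite c) -> lam n <= c.
Proof. intros Hn [mu [Hm Hd]]. apply (LB n mu c Hn Hm). intros x Hx. eapply C_ball1; eauto. Qed.

Lemma part2 n : (1 <= n)%nat -> Rbar_le (Finite (lam n)) (least_doubling_const n).
Proof. intros Hn. unfold least_doubling_const. apply Glb_ge. intros c Hc. apply C_ge_lam; auto. Qed.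
Definition cntN (n x r : nat) : nat := (Nat.min n (x + r) + 1 - Nat.max 1 (x - r))%nat.

Lemma cntN_S n x r : (1 <= x)%nat ->
  cntN (S n) x r = (cntN n x r + (if Nat.leb (path_dist x (S n)) r then 1 else 0))%nat.
Proof. intros Hx. unfold cntN, path_dist.
  destruct (Nat.leb_spec (x - S n + (S n - x)) r); lia. Qed.

Lemma cnt_T n x r : (1 <= x)%nat ->
  T (fun y => if Nat.leb (path_dist x y) r then 1 else 0) n = INR (cntN n x r).
Proof. intros Hx. induction n.
  - simpl. unfold cntN. replace (Nat.min 0 (x + r) + 1 - Nat.max 1 (x - r))%nat with 0%nat by lia. reflexivity.
  - rewrite T_S, IHn, cntN_S by exact Hx. rewrite plus_INR.
    destruct (Nat.leb _ _); simpl; ring. Qed.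

Lemma ball_cnt_le n mu x r M : (1 <= x)%nat -> (forall y, vertex n y -> 0 <= mu y <= M) ->
  ball_mass n mu x r <= M * INR (cntN n x r).
Proof. intros Hx H. rewrite ball_T, <- cnt_T by exact Hx. rewrite <- T_scal. apply T_le.
  intros i Hi. destruct (Nat.leb _ _); [rewrite Rmult_1_r; apply H; exact Hi| lra]. Qed.

Lemma ball_cnt_ge n mu x r : (1 <= x)%nat -> (forall y, vertex n y -> 1 <= mu y) ->
  INR (cntN n x r) <= ball_mass n mu x r.
Proof. intros Hx H. rewrite ball_T, <- cnt_T by exact Hx. apply T_le.
  intros i Hi. destruct (Nat.leb _ _); [apply H; exact Hi| lra]. Qed.

Definition eps3 (n : nat) : R := 1 / (40 * (INR (n + 1))^2).
Definition m3 (n : nat) (y : nat) : R := 1 + eps3 n * (INR y * (INR (n + 1) - INR y)).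

Lemma eps3_pos n : 0 < eps3 n.
Proof. unfold eps3. pose proof (INR_n1_pos n). apply Rdiv_lt_0_compat; [lra|]. nra. Qed.

Lemma eps3_small n : eps3 n <= 1/40.
Proof. unfold eps3. pose proof (INR_n1_pos n). assert (1 <= INR (n+1)) by (apply (le_INR 1); lia).
  apply Rmult_le_reg_r with (40 * INR (n+1) ^ 2); [nra|]. unfold Rdiv. rewrite Rmult_assoc, Rinv_l by nra. nra. Qed.

Lemma m3_bounds n y : vertex n y -> 1 <= m3 n y <= 1 + 1/40.
Proof. intros Hy. unfold vertex in Hy. unfold m3.
  pose proof (INR_n1_pos n). pose proof (eps3_pos n).
  assert (Hy1 : 1 <= INR y) by (apply (le_INR 1); lia).
  assert (Hy2 : INR y + 1 <= INR (n + 1)) by (rewrite plus_INR; simpl; apply Rplus_le_compat_r, le_INR; lia).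
  assert (0 <= INR y * (INR (n + 1) - INR y) <= INR (n+1) ^ 2) by nra.
  assert (eps3 n * INR (n+1) ^ 2 = 1/40).
  { unfold eps3. field. lra. }
  nra. Qed.

Lemma m3_measure n : is_measure n (m3 n).
Proof. intros v Hv. pose proof (m3_bounds n v Hv). lra. Qed.

Lemma ext_m3 n a : 0 <= ext n (m3 n) a <= 1 + 1/40.
Proof. unfold ext. destruct (Nat.leb_spec 1 a); destruct (Nat.leb_spec a n); simpl; try lra.
  pose proof (m3_bounds n a ltac:(unfold vertex; lia)). lra. Qed.

Lemma m3_k0 n x : (2 <= n)%nat -> vertex n x ->
  ball_mass n (m3 n) x 1 <= (3 - eps3 n) * m3 n x.
Proof. intros Hn Hx. rewrite ball1 by exact Hx. unfold vertex in Hx.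
  pose proof (m3_bounds n x ltac:(unfold vertex; lia)). pose proof (eps3_small n). pose proof (eps3_pos n).
  pose proof (ext_m3 n (x-1)). pose proof (ext_m3 n (x+1)).
  rewrite (ext_in n (m3 n) x) by lia.
  destruct (Nat.eq_dec x 1) as [->|Hx1].
  - simpl (1 - 1)%nat. rewrite ext_0. nra.
  - destruct (Nat.eq_dec x n) as [->|Hxn].
    + replace (n + 1)%nat with (S n) by lia. rewrite ext_out. nra.
    + rewrite !ext_in by lia. unfold m3 in *.
      rewrite minus_INR by lia. rewrite (plus_INR x 1). simpl (INR 1). nra. Qed.

Lemma m3_dc n : (2 <= n)%nat -> exists c, doubling_const n (m3 n) = Finite c /\ c < 3.
Proof. intros Hn. destruct (dc_bound n (m3 n) (3 - eps3 n)) as [c [Hc Hc3]].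
  - lia.
  - apply m3_measure.
  - intros x k Hx. destruct k as [|k].
    + simpl (2 * 0 + 1)%nat. rewrite ball0 by exact Hx. apply m3_k0; auto.
    + assert (Hx1 : (1 <= x)%nat) by (unfold vertex in Hx; lia).
      pose proof (ball_cnt_le n (m3 n) x (2 * S k + 1) (1 + 1/40) Hx1
         (fun y Hy => let H := m3_bounds n y Hy in conj (Rle_trans _ _ _ (Rle_0_1) (proj1 H)) (proj2 H))).
      pose proof (ball_cnt_ge n (m3 n) x (S k) Hx1 (fun y Hy => proj1 (m3_bounds n y Hy))).
      assert (Hc1 : (cntN n x (2 * S k + 1) <= 2 * cntN n x (S k) + 1)%nat) by (unfold cntN, vertex in *; lia).
      assert (Hc2 : (2 <= cntN n x (S k))%nat) by (unfold cntN, vertex in *; lia).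
      apply le_INR in Hc1. apply le_INR in Hc2. rewrite plus_INR, mult_INR in Hc1.
      replace (INR 2) with 2 in * by (simpl; ring). replace (INR 1) with 1 in * by reflexivity.
      pose proof (eps3_small n). pose proof (eps3_pos n).
      set (b := ball_mass n (m3 n) x (S k)) in *.
      set (a := ball_mass n (m3 n) x (2 * S k + 1)) in *.
      assert (eps3 n * b <= b / 40) by nra. lra.
  - exists c. split; auto. pose proof (eps3_pos n). lra. Qed.

Lemma part3 n : (2 <= n)%nat -> Rbar_lt (least_doubling_const n) (Finite 3).
Proof. intros Hn. destruct (m3_dc n Hn) as [c [Hc Hc3]].
  apply Rbar_le_lt_trans with (Finite c); [|simpl; exact Hc3].
  unfold least_doubling_const. apply Glb_le. exists (m3 n). split; [apply m3_measure| exact Hc]. Qed.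
Lemma cos3 x : cos (3 * x) = 4 * cos x ^ 3 - 3 * cos x.
Proof. replace (3 * x) with (2 * x + x) by ring. rewrite cos_plus, cos_2a_cos, sin_2a.
  pose proof (sin2_cos2 x). unfold Rsqr in H. 
  replace (2 * sin x * cos x * sin x) with (2 * cos x * (sin x * sin x)) by ring.
  replace (sin x * sin x) with (1 - cos x * cos x) by lra. ring. Qed.

Lemma g_pos n : (9 <= n)%nat -> 0 < (lam n - 1) ^ 3 - 3 * (lam n - 1) - 1.
Proof. intros Hn. unfold lam.
  replace ((1 + 2 * cos (th n) - 1) ^ 3 - 3 * (1 + 2 * cos (th n) - 1) - 1)
    with (2 * (4 * cos (th n) ^ 3 - 3 * cos (th n)) - 1) by ring.
  rewrite <- cos3.
  assert (cos (PI / 3) < cos (3 * th n)).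
  { pose proof (th_pos n). pose proof PI_RGT_0.
    assert (3 * th n < PI / 3).
    { unfold th. assert (10 <= INR (n + 1)).
      { replace 10 with (INR 10) by (simpl; ring). apply le_INR; lia. }
      apply Rmult_lt_reg_r with (INR (n+1)); [lra|].
      replace (3 * (PI / INR (n + 1)) * INR (n + 1)) with (3 * PI) by (field; lra).
      nra. }
    apply cos_decreasing_1; lra. }
  rewrite cos_PI3 in H. lra. Qed.

Lemma lam_lt3 n : lam n < 3.
Proof. unfold lam. pose proof (th_pos n). 
  assert (cos (th n) < 1).
  { destruct (Rle_lt_dec (th n) PI).
    - rewrite <- cos_0. apply cos_decreasing_1; lra.
    - pose proof (COS_bound (th n)). destruct (Req_dec (cos (th n)) 1); [|lra].
      exfalso. unfold th in r. 
      assert (1 <= INR (n + 1)) by (apply (le_INR 1); lia).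
      assert (PI / INR (n+1) <= PI).
      { unfold Rdiv. rewrite <- (Rmult_1_r PI) at 2. apply Rmult_le_compat_l; [pose proof PI_RGT_0; lra|].
        rewrite <- Rinv_1. apply Rinv_le_contravar; lra. }
      lra. }
  lra. Qed.

Lemma lam_ge2 n : (2 <= n)%nat -> 2 <= lam n.
Proof. intros Hn. unfold lam.
  assert (cos (PI / 3) <= cos (th n)).
  { pose proof (th_pos n). pose proof PI_RGT_0.
    assert (th n <= PI / 3).
    { unfold th. assert (3 <= INR (n + 1)).
      { replace 3 with (INR 3) by (simpl; ring). apply le_INR; lia. }
      apply Rmult_le_reg_r with (INR (n+1)); [lra|].
      replace (PI / INR (n + 1) * INR (n + 1)) with PI by (field; lra).
      replace (PI / 3 * INR (n + 1)) with (PI * (INR (n+1) / 3)) by (field; lra).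
      nra. }
    apply cos_decr_1; lra. }
  rewrite cos_PI3 in H. lra. Qed.

Lemma mu_next n mu c x : is_measure n mu -> doubling_const n mu = Finite c -> c < 3 ->
  (1 <= x)%nat -> (x + 1 <= n)%nat -> mu (x + 1)%nat <= 3 * mu x.
Proof. intros Hm Hd Hc Hx1 Hxn.
  assert (Hv : vertex n x) by (unfold vertex; lia).
  pose proof (C_ball1 n mu c x Hm Hd Hv) as B. rewrite ball1 in B by exact Hv.
  rewrite (ext_in n mu x) in B by lia. rewrite (ext_in n mu (x+1)) in B by lia.
  assert (0 <= ext n mu (x - 1)).
  { unfold ext. destruct (Nat.leb 1 (x-1) && Nat.leb (x-1) n)%bool eqn:E; [|lra].
    apply andb_prop in E. destruct E as [E1 E2]. apply Nat.leb_le in E1. apply Nat.leb_le in E2.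
    apply Rlt_le, Hm. unfold vertex; lia. }
  pose proof (Hm x Hv). nra. Qed.

Lemma mu_pow n mu c : is_measure n mu -> doubling_const n mu = Finite c -> c < 3 ->
  forall j, (1 <= j <= n)%nat -> mu j <= 3 ^ (j - 1) * mu 1%nat.
Proof. intros Hm Hd Hc j. induction j as [|j IH]; intros Hj; [lia|].
  destruct (Nat.eq_dec j 0) as [->|Hj0]; [simpl; lra|].
  pose proof (mu_next n mu c j Hm Hd Hc ltac:(lia) ltac:(lia)) as H.
  replace (j + 1)%nat with (S j) in H by lia.
  specialize (IH ltac:(lia)).
  replace (S j - 1)%nat with (S (j - 1)) by lia. simpl pow. nra. Qed.

Lemma ball_trunc n mu x r m : (forall y, (m < y)%nat -> (r < path_dist x y)%nat) -> (m <= n)%nat ->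
  ball_mass n mu x r = T (fun y => if Nat.leb (path_dist x y) r then mu y else 0) m.
Proof. intros H Hm. rewrite ball_T. apply T_trunc; auto.
  intros y Hy. specialize (H y Hy). destruct (Nat.leb_spec (path_dist x y) r); [lia|reflexivity]. Qed.

Lemma gap n : (9 <= n)%nat -> exists d, 0 < d /\
  forall c, (exists mu, is_measure n mu /\ doubling_const n mu = Finite c) -> lam n + d <= c.
Proof. intros Hn.
  set (g := (lam n - 1) ^ 3 - 3 * (lam n - 1) - 1).
  set (m := Rmin (sn n 1) (Rmin (sn n 2) (sn n 3))).
  set (K := INR n * 3 ^ n).
  assert (Hg : 0 < g) by (apply g_pos; auto).
  assert (Hmpos : 0 < m) by (unfold m; repeat apply Rmin_glb_lt; apply sn_pos; lia).
  assert (HK : 0 < K) by (unfold K; apply Rmult_lt_0_compat; [apply lt_0_INR; lia| apply pow_lt; lra]).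
  exists (Rmin (3 - lam n) (m * g / (9 * K))). split.
  { apply Rmin_glb_lt; [pose proof (lam_lt3 n); lra| apply Rdiv_lt_0_compat; nra]. }
  intros c Hc. pose proof (C_ge_lam n c ltac:(lia) Hc) as Hlc.
  destruct Hc as [mu [Hm Hd]].
  destruct (Rle_lt_dec 3 c) as [H3|H3].
  { pose proof (Rmin_l (3 - lam n) (m * g / (9 * K))). lra. }
  eapply Rle_trans; [apply Rplus_le_compat_l, Rmin_r|].
  set (S := T (fun x => sn n x * mu x) n).
  set (e := fun x => c * mu x - ball_mass n mu x 1).
  assert (He : forall x, vertex n x -> 0 <= e x).
  { intros x Hx. unfold e. pose proof (C_ball1 n mu c x Hm Hd Hx). lra. }
  assert (Hsum : T (fun x => sn n x * e x) n = (c - lam n) * S).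
  { unfold e, S. rewrite (T_ext _ (fun x => c * (sn n x * mu x) + (-1) * (sn n x * ball_mass n mu x 1)))
      by (intros; ring).
    rewrite T_plus, !T_scal, identity_I. ring. }
  assert (Hej : forall j, (1 <= j <= 3)%nat -> m * e j <= (c - lam n) * S).
  { intros j Hj. rewrite <- Hsum.
    apply Rle_trans with (sn n j * e j).
    - apply Rmult_le_compat_r; [apply He; unfold vertex; lia|].
      unfold m. destruct (Nat.eq_dec j 1) as [->|]; [apply Rmin_l|].
      destruct (Nat.eq_dec j 2) as [->|]; [eapply Rle_trans; [apply Rmin_r| apply Rmin_l]|].
      replace j with 3%nat by lia. eapply Rle_trans; [apply Rmin_r| apply Rmin_r].
    - apply (T_single (fun x => sn n x * e x) n j); [|lia].
      intros i Hi. apply Rmult_le_pos; [apply Rlt_le, sn_pos; lia| apply He; exact Hi]. }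
  assert (HS : S <= K * mu 1%nat).
  { unfold S, K. rewrite Rmult_assoc, <- T_const. apply T_le. intros i Hi.
    pose proof (mu_pow n mu c Hm Hd H3 i Hi).
    assert (3 ^ (i - 1) <= 3 ^ n) by (apply Rle_pow; [lra| lia]).
    pose proof (sn_le1 n i). pose proof (sn_pos n i Hi). pose proof (Hm i Hi). pose proof (Hm 1%nat ltac:(unfold vertex; lia)).
    assert (mu i <= 3 ^ n * mu 1%nat) by nra. nra. }
  assert (B11 : ball_mass n mu 1 1 = mu 1%nat + mu 2%nat).
  { rewrite (ball_trunc n mu 1 1 2) by (unfold path_dist; lia). simpl. ring. }
  assert (B21 : ball_mass n mu 2 1 = mu 1%nat + mu 2%nat + mu 3%nat).
  { rewrite (ball_trunc n mu 2 1 3) by (unfold path_dist; lia). simpl. ring. }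
  assert (B31 : ball_mass n mu 3 1 = mu 2%nat + mu 3%nat + mu 4%nat).
  { rewrite (ball_trunc n mu 3 1 4) by (unfold path_dist; lia). simpl. ring. }
  assert (B13 : ball_mass n mu 1 3 = mu 1%nat + mu 2%nat + mu 3%nat + mu 4%nat).
  { rewrite (ball_trunc n mu 1 3 4) by (unfold path_dist; lia). simpl. ring. }
  pose proof (ratio_le' n mu c 1 1 Hm Hd ltac:(unfold vertex; lia)) as Hk1.
  simpl (2 * 1 + 1)%nat in Hk1. rewrite B13, B11 in Hk1.
  pose proof (Hej 1%nat ltac:(lia)) as E1. pose proof (Hej 2%nat ltac:(lia)) as E2. pose proof (Hej 3%nat ltac:(lia)) as E3.
  pose proof (He 1%nat ltac:(unfold vertex; lia)) as P1.
  pose proof (He 2%nat ltac:(unfold vertex; lia)) as P2.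
  pose proof (He 3%nat ltac:(unfold vertex; lia)) as P3.
  unfold e in E1, E2, E3, P1, P2, P3. rewrite B11 in E1, P1. rewrite B21 in E2, P2. rewrite B31 in E3, P3.
  set (e1 := c * mu 1%nat - (mu 1%nat + mu 2%nat)) in *.
  set (e2 := c * mu 2%nat - (mu 1%nat + mu 2%nat + mu 3%nat)) in *.
  set (e3 := c * mu 3%nat - (mu 2%nat + mu 3%nat + mu 4%nat)) in *.
  set (a := c - 1).
  assert (Iden : c * (mu 1%nat + mu 2%nat) - (mu 1%nat + mu 2%nat + mu 3%nat + mu 4%nat) =
     (1 + 3 * a - a ^ 3) * mu 1%nat + (a ^ 2 - 1) * e1 + (1 + a) * e2 + e3).
  { unfold e1, e2, e3, a. ring. }
  set (a0 := lam n - 1) in *.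
  assert (Ha0 : 1 <= a0) by (unfold a0; pose proof (lam_ge2 n ltac:(lia)); lra).
  assert (Ha : a = a0 + (c - lam n)) by (unfold a, a0; ring).
  set (dc := c - lam n) in *.
  assert (Hdc : 0 <= dc) by (unfold dc; lra).
  assert (Ha2 : a < 2) by (unfold a; lra).
  assert (Hmu1 : 0 < mu 1%nat) by (apply Hm; unfold vertex; lia).
  assert (Hcub : g <= a ^ 3 - 3 * a - 1).
  { unfold g. fold a0. rewrite Ha.
    assert (0 <= dc * ((a0 + dc) ^ 2 + (a0 + dc) * a0 + a0 ^ 2 - 3)) by (apply Rmult_le_pos; nra).
    nra. }
  assert (Hstep1 : (a ^ 3 - 3 * a - 1) * mu 1%nat <= 3 * (e1 + e2 + e3)).
  { assert ((a ^ 2 - 1) * e1 <= 3 * e1) by (apply Rmult_le_compat_r; nra).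
    assert ((1 + a) * e2 <= 3 * e2) by (apply Rmult_le_compat_r; lra).
    nra. }
  assert (Hstep2 : m * (e1 + e2 + e3) <= 3 * dc * K * mu 1%nat).
  { assert (dc * S <= dc * (K * mu 1%nat)) by (apply Rmult_le_compat_l; lra). nra. }
  assert (Hstep3 : m * g * mu 1%nat <= 9 * dc * K * mu 1%nat).
  { assert (m * g * mu 1%nat <= m * ((a ^ 3 - 3 * a - 1) * mu 1%nat)).
    { rewrite <- Rmult_assoc. apply Rmult_le_compat_r; [lra|]. apply Rmult_le_compat_l; lra. }
    assert (m * ((a ^ 3 - 3 * a - 1) * mu 1%nat) <= m * (3 * (e1 + e2 + e3))) by (apply Rmult_le_compat_l; lra).
    lra. }
  assert (Hstep4 : m * g <= 9 * K * dc).
  { apply Rmult_le_reg_r with (mu 1%nat); auto. lra. }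
  assert (m * g / (9 * K) <= dc).
  { apply div_le; [lra|]. lra. }
  unfold dc in *. lra.
Qed.
Lemma fact_R k : INR (Factorial.fact k) = IZR (Z.of_nat (Factorial.fact k)).
Proof. apply INR_IZR_INZ. Qed.

Lemma sin_lb_eq a : sin_lb a = a - a^3/6 + a^5/120 - a^7/5040.
Proof. unfold sin_lb, sin_approx, sin_term. cbn [sum_f_R0].
  change (INR (Factorial.fact (2*0+1))) with (INR 1).
  replace (INR (Factorial.fact (2*1+1))) with 6 by (rewrite fact_R; reflexivity).
  replace (INR (Factorial.fact (2*2+1))) with 120 by (rewrite fact_R; reflexivity).
  replace (INR (Factorial.fact (2*3+1))) with 5040 by (rewrite fact_R; reflexivity).
  simpl. field. Qed.

Lemma sin_ub_eq a : sin_ub a = a - a^3/6 + a^5/120 - a^7/5040 + a^9/362880.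
Proof. unfold sin_ub, sin_approx, sin_term. cbn [sum_f_R0].
  change (INR (Factorial.fact (2*0+1))) with (INR 1).
  replace (INR (Factorial.fact (2*1+1))) with 6 by (rewrite fact_R; reflexivity).
  replace (INR (Factorial.fact (2*2+1))) with 120 by (rewrite fact_R; reflexivity).
  replace (INR (Factorial.fact (2*3+1))) with 5040 by (rewrite fact_R; reflexivity).
  replace (INR (Factorial.fact (2*4+1))) with 362880 by (rewrite fact_R; reflexivity).
  simpl. field. Qed.

Lemma PI_bounds : 6 * 0.52359 < PI < 6 * 0.5236.
Proof. pose proof PI2_3_2. pose proof (sin_PI6).
  split.
  - destruct (Rlt_le_dec (6 * 0.52359) PI) as [H1|H1]; auto. exfalso.
    assert (sin (PI / 6) <= sin 0.52359).
    { apply sin_incr_1; lra. }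
    pose proof (SIN 0.52359 ltac:(lra) ltac:(lra)) as [_ Hu]. rewrite sin_ub_eq in Hu. lra.
  - destruct (Rlt_le_dec PI (6 * 0.5236)) as [H1|H1]; auto. exfalso.
    assert (sin 0.5236 <= sin (PI / 6)).
    { apply sin_incr_1; lra. }
    pose proof (SIN 0.5236 ltac:(lra) ltac:(lra)) as [Hl _]. rewrite sin_lb_eq in Hl. lra. Qed.

Lemma sin_bnd x qa qb : 0 <= qa -> qa <= x -> x <= qb -> qb <= PI / 2 ->
  qa - qa^3/6 + qa^5/120 - qa^7/5040 <= sin x <= qb - qb^3/6 + qb^5/120 - qb^7/5040 + qb^9/362880.
Proof. intros H1 H2 H3 H4. pose proof PI_RGT_0. rewrite <- sin_lb_eq, <- sin_ub_eq. split.
  - apply Rle_trans with (sin qa); [apply SIN; lra| apply sin_incr_1; lra].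
  - apply Rle_trans with (sin qb); [apply sin_incr_1; lra| apply SIN; lra]. Qed.

Lemma sn_bnd n j : (1 <= j)%nat -> (2 * j < n + 1)%nat ->
  let qa := INR j * (6 * 0.52359) / INR (n + 1) in
  let qb := INR j * (6 * 0.5236) / INR (n + 1) in
  qb <= 3 * 0.52359 ->
  qa - qa^3/6 + qa^5/120 - qa^7/5040 <= sn n j <= qb - qb^3/6 + qb^5/120 - qb^7/5040 + qb^9/362880.
Proof. intros Hj Hjn qa qb Hqb. pose proof PI_bounds. pose proof (INR_n1_pos n).
  assert (0 <= INR j) by apply pos_INR.
  unfold sn, th. apply sin_bnd.
  - unfold qa. apply Rmult_le_pos; [nra| apply Rlt_le, Rinv_0_lt_compat; lra].
  - unfold qa. unfold Rdiv. rewrite Rmult_assoc. apply Rmult_le_compat_l; auto.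
    apply Rmult_le_compat_r; [apply Rlt_le, Rinv_0_lt_compat; lra| lra].
  - unfold qb. unfold Rdiv. rewrite Rmult_assoc. apply Rmult_le_compat_l; auto.
    apply Rmult_le_compat_r; [apply Rlt_le, Rinv_0_lt_compat; lra| lra].
  - lra. Qed.

Lemma sn_mid n j : (2 * j = n + 1)%nat -> sn n j = 1.
Proof. intros H. unfold sn, th. replace (INR j * (PI / INR (n + 1))) with (PI / 2).
  apply sin_PI2. rewrite <- H. rewrite mult_INR. simpl (INR 2). field.
  pose proof (INR_n1_pos n). rewrite <- H, mult_INR in H0. simpl (INR 2) in H0. lra. Qed.

Lemma sn_sym n j : (j <= n + 1)%nat -> sn n (n + 1 - j) = sn n j.
Proof. intros H. unfold sn, th. rewrite minus_INR by exact H.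
  replace ((INR (n + 1) - INR j) * (PI / INR (n + 1))) with (PI - INR j * (PI / INR (n + 1))).
  apply sin_PI_x. field. pose proof (INR_n1_pos n). lra. Qed.

Lemma sn_lamrec n j : (1 <= j)%nat -> lam n * sn n j = sn n (j - 1) + sn n j + sn n (j + 1).
Proof. intros H. pose proof (sn_rec n j H). unfold lam. lra. Qed.

Lemma sn8_tight : sn 8 4 = sn 8 1 + sn 8 2.
Proof. unfold sn, th. replace (INR (8 + 1)) with 9 by (simpl; ring).
  replace (INR 4) with 4 by (simpl; ring). replace (INR 2) with 2 by (simpl; ring).
  replace (INR 1) with 1 by reflexivity.
  replace (4 * (PI / 9)) with (PI / 3 + PI / 9) by field.
  replace (2 * (PI / 9)) with (PI / 3 - PI / 9) by field.
  rewrite Rmult_1_l, sin_plus, sin_minus, cos_PI3. field. Qed.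
Lemma chk3 (s : nat -> R) (l : R)
  (HR : forall j, (1 <= j <= 3)%nat -> l * s j = s (j - 1)%nat + s j + s (j + 1)%nat)
  (H0 : s 0%nat = 0) (HE : s 4%nat = 0)
  (HS : forall j, (1 <= j <= 3)%nat -> s (4 - j)%nat = s j) (B1 : 0.707 <= s 1%nat <= 0.7072) (M : s 2%nat = 1) :
  forall x k, (1 <= x <= 3)%nat -> (1 <= k <= 3-2)%nat ->
  ball_mass 3 s x (2 * k + 1) <= l * ball_mass 3 s x k.
Proof. intros x k Hx Hk. pose proof (HR 1%nat ltac:(lia)). pose proof (HS 1%nat ltac:(lia)). pose proof (HR 2%nat ltac:(lia)). pose proof (HS 2%nat ltac:(lia)). pose proof (HR 3%nat ltac:(lia)). pose proof (HS 3%nat ltac:(lia)).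
  simpl in *.
  assert (Hx' : x = 1%nat \/ x = 2%nat \/ x = 3%nat) by lia.
  assert (Hk' : k = 1%nat) by lia.
  destruct Hx' as [-> | [-> | ->]]; subst k;
  unfold ball_mass; simpl; repeat rewrite Rmult_plus_distr_l; rewrite ?Rmult_0_r; lra.
Qed.

Lemma chk4 (s : nat -> R) (l : R)
  (HR : forall j, (1 <= j <= 4)%nat -> l * s j = s (j - 1)%nat + s j + s (j + 1)%nat)
  (H0 : s 0%nat = 0) (HE : s 5%nat = 0)
  (HS : forall j, (1 <= j <= 4)%nat -> s (5 - j)%nat = s j) (B1 : 0.5877 <= s 1%nat <= 0.5878) (B2 : 0.951 <= s 2%nat <= 0.9511) :
  forall x k, (1 <= x <= 4)%nat -> (1 <= k <= 4-2)%nat ->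
  ball_mass 4 s x (2 * k + 1) <= l * ball_mass 4 s x k.
Proof. intros x k Hx Hk. pose proof (HR 1%nat ltac:(lia)). pose proof (HS 1%nat ltac:(lia)). pose proof (HR 2%nat ltac:(lia)). pose proof (HS 2%nat ltac:(lia)). pose proof (HR 3%nat ltac:(lia)). pose proof (HS 3%nat ltac:(lia)). pose proof (HR 4%nat ltac:(lia)). pose proof (HS 4%nat ltac:(lia)).
  simpl in *.
  assert (Hx' : x = 1%nat \/ x = 2%nat \/ x = 3%nat \/ x = 4%nat) by lia.
  assert (Hk' : k = 1%nat \/ k = 2%nat) by lia.
  destruct Hx' as [-> | [-> | [-> | ->]]]; destruct Hk' as [-> | ->];
  unfold ball_mass; simpl; repeat rewrite Rmult_plus_distr_l; rewrite ?Rmult_0_r; lra.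
Qed.

Lemma chk5 (s : nat -> R) (l : R)
  (HR : forall j, (1 <= j <= 5)%nat -> l * s j = s (j - 1)%nat + s j + s (j + 1)%nat)
  (H0 : s 0%nat = 0) (HE : s 6%nat = 0)
  (HS : forall j, (1 <= j <= 5)%nat -> s (6 - j)%nat = s j) (B1 : 0.4999 <= s 1%nat <= 0.5001) (B2 : 0.866 <= s 2%nat <= 0.8661) (M : s 3%nat = 1) :
  forall x k, (1 <= x <= 5)%nat -> (1 <= k <= 5-2)%nat ->
  ball_mass 5 s x (2 * k + 1) <= l * ball_mass 5 s x k.
Proof. intros x k Hx Hk. pose proof (HR 1%nat ltac:(lia)). pose proof (HS 1%nat ltac:(lia)). pose proof (HR 2%nat ltac:(lia)). pose proof (HS 2%nat ltac:(lia)). pose proof (HR 3%nat ltac:(lia)). pose proof (HS 3%nat ltac:(lia)). pose proof (HR 4%nat ltac:(lia)). pose proof (HS 4%nat ltac:(lia)). pose proof (HR 5%nat ltac:(lia)). pose proof (HS 5%nat ltac:(lia)).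
  simpl in *.
  assert (Hx' : x = 1%nat \/ x = 2%nat \/ x = 3%nat \/ x = 4%nat \/ x = 5%nat) by lia.
  assert (Hk' : k = 1%nat \/ k = 2%nat \/ k = 3%nat) by lia.
  destruct Hx' as [-> | [-> | [-> | [-> | ->]]]]; destruct Hk' as [-> | [-> | ->]];
  unfold ball_mass; simpl; repeat rewrite Rmult_plus_distr_l; rewrite ?Rmult_0_r; lra.
Qed.

Lemma chk6 (s : nat -> R) (l : R)
  (HR : forall j, (1 <= j <= 6)%nat -> l * s j = s (j - 1)%nat + s j + s (j + 1)%nat)
  (H0 : s 0%nat = 0) (HE : s 7%nat = 0)
  (HS : forall j, (1 <= j <= 6)%nat -> s (7 - j)%nat = s j) (B1 : 0.4338 <= s 1%nat <= 0.4339) (B2 : 0.7818 <= s 2%nat <= 0.7819) (B3 : 0.9748 <= s 3%nat <= 0.975) :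
  forall x k, (1 <= x <= 6)%nat -> (1 <= k <= 6-2)%nat ->
  ball_mass 6 s x (2 * k + 1) <= l * ball_mass 6 s x k.
Proof. intros x k Hx Hk. pose proof (HR 1%nat ltac:(lia)). pose proof (HS 1%nat ltac:(lia)). pose proof (HR 2%nat ltac:(lia)). pose proof (HS 2%nat ltac:(lia)). pose proof (HR 3%nat ltac:(lia)). pose proof (HS 3%nat ltac:(lia)). pose proof (HR 4%nat ltac:(lia)). pose proof (HS 4%nat ltac:(lia)). pose proof (HR 5%nat ltac:(lia)). pose proof (HS 5%nat ltac:(lia)). pose proof (HR 6%nat ltac:(lia)). pose proof (HS 6%nat ltac:(lia)).
  simpl in *.
  assert (Hx' : x = 1%nat \/ x = 2%nat \/ x = 3%nat \/ x = 4%nat \/ x = 5%nat \/ x = 6%nat) by lia.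
  assert (Hk' : k = 1%nat \/ k = 2%nat \/ k = 3%nat \/ k = 4%nat) by lia.
  destruct Hx' as [-> | [-> | [-> | [-> | [-> | ->]]]]]; destruct Hk' as [-> | [-> | [-> | ->]]];
  unfold ball_mass; simpl; repeat rewrite Rmult_plus_distr_l; rewrite ?Rmult_0_r; lra.
Qed.

Lemma chk7 (s : nat -> R) (l : R)
  (HR : forall j, (1 <= j <= 7)%nat -> l * s j = s (j - 1)%nat + s j + s (j + 1)%nat)
  (H0 : s 0%nat = 0) (HE : s 8%nat = 0)
  (HS : forall j, (1 <= j <= 7)%nat -> s (8 - j)%nat = s j) (B1 : 0.3826 <= s 1%nat <= 0.3827) (B2 : 0.707 <= s 2%nat <= 0.7072) (B3 : 0.9238 <= s 3%nat <= 0.9239) (M : s 4%nat = 1) :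
  forall x k, (1 <= x <= 7)%nat -> (1 <= k <= 7-2)%nat ->
  ball_mass 7 s x (2 * k + 1) <= l * ball_mass 7 s x k.
Proof. intros x k Hx Hk. pose proof (HR 1%nat ltac:(lia)). pose proof (HS 1%nat ltac:(lia)). pose proof (HR 2%nat ltac:(lia)). pose proof (HS 2%nat ltac:(lia)). pose proof (HR 3%nat ltac:(lia)). pose proof (HS 3%nat ltac:(lia)). pose proof (HR 4%nat ltac:(lia)). pose proof (HS 4%nat ltac:(lia)). pose proof (HR 5%nat ltac:(lia)). pose proof (HS 5%nat ltac:(lia)). pose proof (HR 6%nat ltac:(lia)). pose proof (HS 6%nat ltac:(lia)). pose proof (HR 7%nat ltac:(lia)). pose proof (HS 7%nat ltac:(lia)).
  simpl in *.
  assert (Hx' : x = 1%nat \/ x = 2%nat \/ x = 3%nat \/ x = 4%nat \/ x = 5%nat \/ x = 6%nat \/ x = 7%nat) by lia.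
  assert (Hk' : k = 1%nat \/ k = 2%nat \/ k = 3%nat \/ k = 4%nat \/ k = 5%nat) by lia.
  destruct Hx' as [-> | [-> | [-> | [-> | [-> | [-> | ->]]]]]]; destruct Hk' as [-> | [-> | [-> | [-> | ->]]]];
  unfold ball_mass; simpl; repeat rewrite Rmult_plus_distr_l; rewrite ?Rmult_0_r; lra.
Qed.

Lemma chk8 (s : nat -> R) (l : R)
  (HR : forall j, (1 <= j <= 8)%nat -> l * s j = s (j - 1)%nat + s j + s (j + 1)%nat)
  (H0 : s 0%nat = 0) (HE : s 9%nat = 0)
  (HS : forall j, (1 <= j <= 8)%nat -> s (9 - j)%nat = s j) (B1 : 0.342 <= s 1%nat <= 0.3421) (B2 : 0.6427 <= s 2%nat <= 0.6428) (B3 : 0.866 <= s 3%nat <= 0.8661) (B4 : 0.9847 <= s 4%nat <= 0.9849) (X8 : s 4%nat = s 1%nat + s 2%nat) :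
  forall x k, (1 <= x <= 8)%nat -> (1 <= k <= 8-2)%nat ->
  ball_mass 8 s x (2 * k + 1) <= l * ball_mass 8 s x k.
Proof. intros x k Hx Hk. pose proof (HR 1%nat ltac:(lia)). pose proof (HS 1%nat ltac:(lia)). pose proof (HR 2%nat ltac:(lia)). pose proof (HS 2%nat ltac:(lia)). pose proof (HR 3%nat ltac:(lia)). pose proof (HS 3%nat ltac:(lia)). pose proof (HR 4%nat ltac:(lia)). pose proof (HS 4%nat ltac:(lia)). pose proof (HR 5%nat ltac:(lia)). pose proof (HS 5%nat ltac:(lia)). pose proof (HR 6%nat ltac:(lia)). pose proof (HS 6%nat ltac:(lia)). pose proof (HR 7%nat ltac:(lia)). pose proof (HS 7%nat ltac:(lia)). pose proof (HR 8%nat ltac:(lia)). pose proof (HS 8%nat ltac:(lia)).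
  simpl in *.
  assert (Hx' : x = 1%nat \/ x = 2%nat \/ x = 3%nat \/ x = 4%nat \/ x = 5%nat \/ x = 6%nat \/ x = 7%nat \/ x = 8%nat) by lia.
  assert (Hk' : k = 1%nat \/ k = 2%nat \/ k = 3%nat \/ k = 4%nat \/ k = 5%nat \/ k = 6%nat) by lia.
  destruct Hx' as [-> | [-> | [-> | [-> | [-> | [-> | [-> | ->]]]]]]]; destruct Hk' as [-> | [-> | [-> | [-> | [-> | ->]]]]];
  unfold ball_mass; simpl; repeat rewrite Rmult_plus_distr_l; rewrite ?Rmult_0_r; lra.
Qed.
Lemma bnd_3_1 : 0.707 <= sn 3 1 <= 0.7072.
Proof. pose proof (sn_bnd 3 1 ltac:(lia) ltac:(lia)) as H. cbv zeta in H.
  replace (INR (3 + 1)) with 4 in H by (simpl; ring).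
  replace (INR 1) with 1 in H by (simpl; ring).
  specialize (H ltac:(lra)). lra. Qed.

Lemma small_3 : forall x k, (1 <= x <= 3)%nat -> (1 <= k <= 3-2)%nat ->
  ball_mass 3 (sn 3) x (2 * k + 1) <= lam 3 * ball_mass 3 (sn 3) x k.
Proof. apply (chk3 (sn 3) (lam 3)).
  - intros j Hj. apply sn_lamrec. lia.
  - apply sn_0.
  - exact (sn_end 3).
  - intros j Hj. exact (sn_sym 3 j ltac:(lia)).
  - exact bnd_3_1.
  - exact (sn_mid 3 2 ltac:(lia)).
Qed.

Lemma bnd_4_1 : 0.5877 <= sn 4 1 <= 0.5878.
Proof. pose proof (sn_bnd 4 1 ltac:(lia) ltac:(lia)) as H. cbv zeta in H.
  replace (INR (4 + 1)) with 5 in H by (simpl; ring).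
  replace (INR 1) with 1 in H by (simpl; ring).
  specialize (H ltac:(lra)). lra. Qed.

Lemma bnd_4_2 : 0.951 <= sn 4 2 <= 0.9511.
Proof. pose proof (sn_bnd 4 2 ltac:(lia) ltac:(lia)) as H. cbv zeta in H.
  replace (INR (4 + 1)) with 5 in H by (simpl; ring).
  replace (INR 2) with 2 in H by (simpl; ring).
  specialize (H ltac:(lra)). lra. Qed.

Lemma small_4 : forall x k, (1 <= x <= 4)%nat -> (1 <= k <= 4-2)%nat ->
  ball_mass 4 (sn 4) x (2 * k + 1) <= lam 4 * ball_mass 4 (sn 4) x k.
Proof. apply (chk4 (sn 4) (lam 4)).
  - intros j Hj. apply sn_lamrec. lia.
  - apply sn_0.
  - exact (sn_end 4).
  - intros j Hj. exact (sn_sym 4 j ltac:(lia)).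
  - exact bnd_4_1.
  - exact bnd_4_2.
Qed.

Lemma bnd_5_1 : 0.4999 <= sn 5 1 <= 0.5001.
Proof. pose proof (sn_bnd 5 1 ltac:(lia) ltac:(lia)) as H. cbv zeta in H.
  replace (INR (5 + 1)) with 6 in H by (simpl; ring).
  replace (INR 1) with 1 in H by (simpl; ring).
  specialize (H ltac:(lra)). lra. Qed.

Lemma bnd_5_2 : 0.866 <= sn 5 2 <= 0.8661.
Proof. pose proof (sn_bnd 5 2 ltac:(lia) ltac:(lia)) as H. cbv zeta in H.
  replace (INR (5 + 1)) with 6 in H by (simpl; ring).
  replace (INR 2) with 2 in H by (simpl; ring).
  specialize (H ltac:(lra)). lra. Qed.

Lemma small_5 : forall x k, (1 <= x <= 5)%nat -> (1 <= k <= 5-2)%nat ->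
  ball_mass 5 (sn 5) x (2 * k + 1) <= lam 5 * ball_mass 5 (sn 5) x k.
Proof. apply (chk5 (sn 5) (lam 5)).
  - intros j Hj. apply sn_lamrec. lia.
  - apply sn_0.
  - exact (sn_end 5).
  - intros j Hj. exact (sn_sym 5 j ltac:(lia)).
  - exact bnd_5_1.
  - exact bnd_5_2.
  - exact (sn_mid 5 3 ltac:(lia)).
Qed.

Lemma bnd_6_1 : 0.4338 <= sn 6 1 <= 0.4339.
Proof. pose proof (sn_bnd 6 1 ltac:(lia) ltac:(lia)) as H. cbv zeta in H.
  replace (INR (6 + 1)) with 7 in H by (simpl; ring).
  replace (INR 1) with 1 in H by (simpl; ring).
  specialize (H ltac:(lra)). lra. Qed.

Lemma bnd_6_2 : 0.7818 <= sn 6 2 <= 0.7819.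
Proof. pose proof (sn_bnd 6 2 ltac:(lia) ltac:(lia)) as H. cbv zeta in H.
  replace (INR (6 + 1)) with 7 in H by (simpl; ring).
  replace (INR 2) with 2 in H by (simpl; ring).
  specialize (H ltac:(lra)). lra. Qed.

Lemma bnd_6_3 : 0.9748 <= sn 6 3 <= 0.975.
Proof. pose proof (sn_bnd 6 3 ltac:(lia) ltac:(lia)) as H. cbv zeta in H.
  replace (INR (6 + 1)) with 7 in H by (simpl; ring).
  replace (INR 3) with 3 in H by (simpl; ring).
  specialize (H ltac:(lra)). lra. Qed.

Lemma small_6 : forall x k, (1 <= x <= 6)%nat -> (1 <= k <= 6-2)%nat ->
  ball_mass 6 (sn 6) x (2 * k + 1) <= lam 6 * ball_mass 6 (sn 6) x k.
Proof. apply (chk6 (sn 6) (lam 6)).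
  - intros j Hj. apply sn_lamrec. lia.
  - apply sn_0.
  - exact (sn_end 6).
  - intros j Hj. exact (sn_sym 6 j ltac:(lia)).
  - exact bnd_6_1.
  - exact bnd_6_2.
  - exact bnd_6_3.
Qed.

Lemma bnd_7_1 : 0.3826 <= sn 7 1 <= 0.3827.
Proof. pose proof (sn_bnd 7 1 ltac:(lia) ltac:(lia)) as H. cbv zeta in H.
  replace (INR (7 + 1)) with 8 in H by (simpl; ring).
  replace (INR 1) with 1 in H by (simpl; ring).
  specialize (H ltac:(lra)). lra. Qed.

Lemma bnd_7_2 : 0.707 <= sn 7 2 <= 0.7072.
Proof. pose proof (sn_bnd 7 2 ltac:(lia) ltac:(lia)) as H. cbv zeta in H.
  replace (INR (7 + 1)) with 8 in H by (simpl; ring).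
  replace (INR 2) with 2 in H by (simpl; ring).
  specialize (H ltac:(lra)). lra. Qed.

Lemma bnd_7_3 : 0.9238 <= sn 7 3 <= 0.9239.
Proof. pose proof (sn_bnd 7 3 ltac:(lia) ltac:(lia)) as H. cbv zeta in H.
  replace (INR (7 + 1)) with 8 in H by (simpl; ring).
  replace (INR 3) with 3 in H by (simpl; ring).
  specialize (H ltac:(lra)). lra. Qed.

Lemma small_7 : forall x k, (1 <= x <= 7)%nat -> (1 <= k <= 7-2)%nat ->
  ball_mass 7 (sn 7) x (2 * k + 1) <= lam 7 * ball_mass 7 (sn 7) x k.
Proof. apply (chk7 (sn 7) (lam 7)).
  - intros j Hj. apply sn_lamrec. lia.
  - apply sn_0.
  - exact (sn_end 7).
  - intros j Hj. exact (sn_sym 7 j ltac:(lia)).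
  - exact bnd_7_1.
  - exact bnd_7_2.
  - exact bnd_7_3.
  - exact (sn_mid 7 4 ltac:(lia)).
Qed.

Lemma bnd_8_1 : 0.342 <= sn 8 1 <= 0.3421.
Proof. pose proof (sn_bnd 8 1 ltac:(lia) ltac:(lia)) as H. cbv zeta in H.
  replace (INR (8 + 1)) with 9 in H by (simpl; ring).
  replace (INR 1) with 1 in H by (simpl; ring).
  specialize (H ltac:(lra)). lra. Qed.

Lemma bnd_8_2 : 0.6427 <= sn 8 2 <= 0.6428.
Proof. pose proof (sn_bnd 8 2 ltac:(lia) ltac:(lia)) as H. cbv zeta in H.
  replace (INR (8 + 1)) with 9 in H by (simpl; ring).
  replace (INR 2) with 2 in H by (simpl; ring).
  specialize (H ltac:(lra)). lra. Qed.

Lemma bnd_8_3 : 0.866 <= sn 8 3 <= 0.8661.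
Proof. pose proof (sn_bnd 8 3 ltac:(lia) ltac:(lia)) as H. cbv zeta in H.
  replace (INR (8 + 1)) with 9 in H by (simpl; ring).
  replace (INR 3) with 3 in H by (simpl; ring).
  specialize (H ltac:(lra)). lra. Qed.

Lemma bnd_8_4 : 0.9847 <= sn 8 4 <= 0.9849.
Proof. pose proof (sn_bnd 8 4 ltac:(lia) ltac:(lia)) as H. cbv zeta in H.
  replace (INR (8 + 1)) with 9 in H by (simpl; ring).
  replace (INR 4) with 4 in H by (simpl; ring).
  specialize (H ltac:(lra)). lra. Qed.

Lemma small_8 : forall x k, (1 <= x <= 8)%nat -> (1 <= k <= 8-2)%nat ->
  ball_mass 8 (sn 8) x (2 * k + 1) <= lam 8 * ball_mass 8 (sn 8) x k.
Proof. apply (chk8 (sn 8) (lam 8)).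
  - intros j Hj. apply sn_lamrec. lia.
  - apply sn_0.
  - exact (sn_end 8).
  - intros j Hj. exact (sn_sym 8 j ltac:(lia)).
  - exact bnd_8_1.
  - exact bnd_8_2.
  - exact bnd_8_3.
  - exact bnd_8_4.
  - exact sn8_tight.
Qed.
Lemma sine_dc_le n : (2 <= n)%nat ->
  (forall x k, (1 <= x <= n)%nat -> (1 <= k <= n - 2)%nat ->
     ball_mass n (sn n) x (2 * k + 1) <= lam n * ball_mass n (sn n) x k) ->
  exists c, doubling_const n (sn n) = Finite c /\ c <= lam n.
Proof. intros Hn H. apply dc_bound; [lia| apply sn_measure|].
  intros x k Hx. pose proof (lam_ge2 n Hn).
  destruct (Nat.eq_dec k 0) as [->|Hk0].
  - simpl (2 * 0 + 1)%nat. rewrite ball0, sn_ball1 by exact Hx. lra.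
  - destruct (le_lt_dec (n - 1) k) as [Hk|Hk].
    + rewrite (ball_full n (sn n) x k) by (auto; lia).
      rewrite (ball_full n (sn n) x (2 * k + 1)) by (auto; lia).
      assert (0 < T (sn n) n).
      { rewrite <- (ball_full n (sn n) x k) by (auto; lia). apply ball_pos; [apply sn_measure| exact Hx]. }
      nra.
    + apply H; [exact Hx| lia]. Qed.

Lemma part4_small n : (2 <= n <= 8)%nat -> least_doubling_const n = Finite (lam n).
Proof. intros Hn.
  assert (Hchk : forall x k, (1 <= x <= n)%nat -> (1 <= k <= n - 2)%nat ->
     ball_mass n (sn n) x (2 * k + 1) <= lam n * ball_mass n (sn n) x k).
  { assert (n = 2 \/ n = 3 \/ n = 4 \/ n = 5 \/ n = 6 \/ n = 7 \/ n = 8)%nat as Hc by lia.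
    destruct Hc as [-> | [-> | [-> | [-> | [-> | [-> | ->]]]]]].
    - intros; lia.
    - exact small_3.
    - exact small_4.
    - exact small_5.
    - exact small_6.
    - exact small_7.
    - exact small_8. }
  destruct (sine_dc_le n ltac:(lia) Hchk) as [c [Hc Hcl]].
  apply Rbar_le_antisym.
  - apply Rbar_le_trans with (Finite c); [|simpl; exact Hcl].
    unfold least_doubling_const. apply Glb_le. exists (sn n). split; [apply sn_measure| exact Hc].
  - apply part2. lia. Qed.

Theorem theorem6p5 (n : nat) (hn : (2 <= n)%nat) :
  least_doubling_const0 n = Finite (1 + 2 * cos (PI / INR (n + 1)))
  /\ Rbar_le (least_doubling_const0 n) (least_doubling_const n)
  /\ Rbar_lt (least_doubling_const n) (Finite 3)
  /\ (least_doubling_const0 n = least_doubling_const n <-> (2 <= n <= 8)%nat).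
Proof.
  pose proof (part1 n ltac:(lia)) as P1. unfold lam, th in P1.
  split; [exact P1|]. split.
  { rewrite (part1 n ltac:(lia)). apply part2. lia. }
  split; [apply part3; exact hn|].
  split.
  - intros Heq. destruct (le_lt_dec n 8) as [Hle|Hgt]; [lia|]. exfalso.
    destruct (gap n ltac:(lia)) as [d [Hd Hgap]].
    assert (Rbar_le (lam n + d) (least_doubling_const n)).
    { unfold least_doubling_const. apply Glb_ge. exact Hgap. }
    rewrite <- Heq, (part1 n ltac:(lia)) in H. simpl in H. lra.
  - intros Hn8. rewrite (part1 n ltac:(lia)), (part4_small n Hn8). reflexivity.
Qed.
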